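(* Let $\mathbf x_1,\dots,\mathbf x_n\in\mathbb R^d$ with $\|\mathbf x_i\|_2=1$ be such that $\mathbf H^\infty$ is positive definite. Suppose $y_i=\sum_j\alpha_j(\boldsymbol\beta_j^\top\mathbf x_i)^{p_j}$ for all $i\in[n]$ (a finite sum), where for each $j$, $p_j\in\{1,2,4,6,8,\dots\}$, $\boldsymbol\beta_j\in\mathbb R^d$, $\alpha_j\in\mathbb R$. Then $$\sqrt{\mathbf y^\top(\mathbf H^\infty)^{-1}\mathbf y}\le3\sum_jp_j|\alpha_j|\,\|\boldsymbol\beta_j\|_2^{p_j}.$$
   Context: $\mathbf y=(y_1,\dots,y_n)^\top$; $\mathbf H^\infty_{ij}=\frac{\mathbf x_i^\top\mathbf x_j(\pi-\arccos(\mathbf x_i^\top\mathbf x_j))}{2\pi}$ (equivalently $\mathbb E_{\mathbf w\sim\mathcal N(\mathbf 0,\mathbf I)}[\mathbf x_i^\top\mathbf x_j\mathbb I\{\mathbf w^\top\mathbf x_i\ge0,\mathbf w^\top\mathbf x_j\ge0\}]$). *)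

(* Defs.v *)
From Stdlib Require Export Reals Lra.
Open Scope R_scope.

Fixpoint sumR (n : nat) (f : nat -> R) : R :=
  match n with
  | O => 0
  | S k => sumR k f + f k
  end.

(* vectors in R^d are functions nat -> R, only indices < d matter *)
Definition dot (d : nat) (u v : nat -> R) : R := sumR d (fun k => u k * v k).
Definition norm2 (d : nat) (u : nat -> R) : R := sqrt (dot d u u).

Definition Hinf (d : nat) (x : nat -> nat -> R) (i j : nat) : R :=
  let c := dot d (x i) (x j) in c * (PI - acos c) / (2 * PI).

Definition pos_def (n : nat) (A : nat -> nat -> R) : Prop :=
  forall v : nat -> R, (exists i, (i < n)%nat /\ v i <> 0) ->
    0 < sumR n (fun i => sumR n (fun j => v i * A i j * v j)).

Definition is_inverse (n : nat) (A B : nat -> nat -> R) : Prop :=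
  (forall i k, (i < n)%nat -> (k < n)%nat ->
     sumR n (fun j => A i j * B j k) = if Nat.eqb i k then 1 else 0) /\
  (forall i k, (i < n)%nat -> (k < n)%nat ->
     sumR n (fun j => B i j * A j k) = if Nat.eqb i k then 1 else 0).

Definition quad (n : nat) (B : nat -> nat -> R) (y : nat -> R) : R :=
  sumR n (fun i => sumR n (fun k => y i * B i k * y k)).

(* Main.v *)
Require Import Defs.
From Stdlib Require Import Reals Lra Lia.
Open Scope R_scope.


Lemma sumR_ext n f g : (forall k, (k < n)%nat -> f k = g k) -> sumR n f = sumR n g.
Proof. induction n; intros H; simpl; auto. rewrite IHn by (intros; apply H; lia). rewrite H by lia. auto. Qed.

Lemma sumR_plus n f g : sumR n (fun k => f k + g k) = sumR n f + sumR n g.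
Proof. induction n; simpl; [lra|]. rewrite IHn. lra. Qed.

Lemma sumR_scal n c f : sumR n (fun k => c * f k) = c * sumR n f.
Proof. induction n; simpl; [lra|]. rewrite IHn. lra. Qed.

Lemma sumR_zero n : sumR n (fun _ => 0) = 0.
Proof. induction n; simpl; [lra|]. rewrite IHn. lra. Qed.

Lemma sumR_swap n m F : sumR n (fun i => sumR m (fun j => F i j)) = sumR m (fun j => sumR n (fun i => F i j)).
Proof. induction n; simpl. - rewrite sumR_zero; auto. - rewrite IHn, <- sumR_plus. auto. Qed.

Lemma sumR_nonneg n f : (forall k, (k < n)%nat -> 0 <= f k) -> 0 <= sumR n f.
Proof. induction n; intros H; simpl; [lra|]. specialize (IHn (fun k Hk => H k ltac:(lia))). specialize (H n ltac:(lia)). lra. Qed.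

Lemma sumR_le n f g : (forall k, (k < n)%nat -> f k <= g k) -> sumR n f <= sumR n g.
Proof. induction n; intros H; simpl; [lra|]. specialize (IHn (fun k Hk => H k ltac:(lia))). specialize (H n ltac:(lia)). lra. Qed.

Lemma sumR_sq n v : sumR n (fun i => sumR n (fun j => v i * v j)) = (sumR n v)^2.
Proof. rewrite (sumR_ext n _ (fun i => v i * sumR n v)). rewrite (sumR_ext n _ (fun i => sumR n v * v i)).
 rewrite sumR_scal. ring. intros; ring. intros; apply sumR_scal. Qed.

Lemma dot_sym d a b : dot d a b = dot d b a.
Proof. unfold dot. apply sumR_ext. intros; ring. Qed.

Lemma dot_self_nonneg d a : 0 <= dot d a a.
Proof. unfold dot. apply sumR_nonneg. intros. nra. Qed.

Definition Qf d N (u : nat -> nat -> R) (v : nat -> R) p :=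
  sumR N (fun i => sumR N (fun j => v i * v j * dot d (u i) (u j) ^ p)).

Lemma Qf_S d N u v p : Qf d N u v (S p) = sumR d (fun k => Qf d N u (fun i => v i * u i k) p).
Proof.
  unfold Qf.
  rewrite (sumR_ext N _ (fun i => sumR d (fun k => sumR N (fun j => (v i * u i k) * (v j * u j k) * dot d (u i) (u j) ^ p)))).
  { apply sumR_swap. }
  intros i _. rewrite <- sumR_swap. apply sumR_ext. intros j _.
  simpl. unfold dot at 1.
  transitivity ((v i * v j * dot d (u i) (u j) ^ p) * sumR d (fun k => u i k * u j k)). ring.
  rewrite <- sumR_scal. apply sumR_ext. intros. ring.
Qed.

Lemma Qf_nonneg d N u p : forall v, 0 <= Qf d N u v p.
Proof.
  induction p; intros v.
  - unfold Qf. simpl. rewrite (sumR_ext N _ (fun i => sumR N (fun j => v i * v j))).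
    rewrite sumR_sq. nra. intros; apply sumR_ext; intros; ring.
  - rewrite Qf_S. apply sumR_nonneg. intros; apply IHp.
Qed.

Lemma quad_disc A B C : 0 <= C -> (forall l, 0 <= A + 2 * l * B + l^2 * C) -> B^2 <= A * C.
Proof.
  intros HC H. destruct (Req_dec C 0) as [E|E].
  - subst. destruct (Req_dec B 0) as [EB|EB]. { subst; nra. }
    specialize (H (-(A+1)/(2*B))). exfalso.
    replace (A + 2 * (- (A + 1) / (2 * B)) * B + (- (A + 1) / (2 * B)) ^ 2 * 0) with (-1) in H by (field; auto). lra.
  - specialize (H (-B/C)).
    replace (A + 2 * (- B / C) * B + (- B / C) ^ 2 * C) with ((A*C - B^2)/C) in H by (field; auto).
    assert (0 < C) by lra.
    apply Rmult_le_compat_r with (r:=C) in H; [|lra].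
    replace ((A * C - B ^ 2) / C * C) with (A*C - B^2) in H by (field; auto). lra.
Qed.

Lemma kernel_CS d n (x : nat -> nat -> R) (z : nat -> R) (be : nat -> R) p :
  (sumR n (fun i => z i * dot d be (x i) ^ p))^2 <= Qf d n x z p * dot d be be ^ p.
Proof.
  apply quad_disc. { apply pow_le, dot_self_nonneg. }
  intros l.
  set (u' := fun i => if Nat.ltb i n then x i else be).
  set (v' := fun i => if Nat.ltb i n then z i else l).
  pose proof (Qf_nonneg d (S n) u' p v') as H.
  unfold Qf in H. simpl in H.
  assert (Hn : Nat.ltb n n = false) by apply Nat.ltb_irrefl.
  assert (Hi : forall i, (i < n)%nat -> Nat.ltb i n = true) by (intros; apply Nat.ltb_lt; auto).
  rewrite (sumR_ext n _ (fun i => sumR n (fun j => z i * z j * dot d (x i) (x j) ^ p) + z i * l * dot d (x i) be ^ p)) in H.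
  2:{ intros i Hi'. unfold u', v'; cbv beta. rewrite (Hi i Hi'), Hn. f_equal. apply sumR_ext. intros j Hj. rewrite !Hi by auto. auto. }
  rewrite sumR_plus in H.
  unfold u', v' in H; cbv beta in H. rewrite Hn in H.
  rewrite (sumR_ext n (fun j => l * (if j <? n then z j else l) * dot d be (if j <? n then x j else be) ^ p) (fun j => l * (z j * dot d be (x j) ^ p))) in H.
  2:{ intros j Hj. rewrite (Hi j Hj). ring. }
  rewrite (sumR_ext n (fun i => z i * l * _) (fun i => l * (z i * dot d be (x i) ^ p))) in H.
  2:{ intros i Hi'. rewrite dot_sym. ring. }
  rewrite !sumR_scal in H. unfold Qf. nra.
Qed.

Fixpoint bb (k : nat) : R :=
  match k with O => 1 | S k' => bb k' * (2 * INR k' + 1) / (2 * INR k' + 2) end.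
Definition cc k := bb k / (2 * INR k + 1).

Lemma bb_facts k : 0 < bb k /\ bb k <= 1 /\ 1 / (2 * INR k + 1) <= bb k.
Proof.
  induction k as [|k [H1 [H2 H3]]]; simpl bb.
  - simpl. lra.
  - pose proof (pos_INR k). rewrite S_INR.
    assert (0 < bb k * (2 * INR k + 1) / (2 * INR k + 2)).
    { apply Rdiv_lt_0_compat; nra. }
    split; [auto|split].
    + apply Rmult_le_reg_r with (2 * INR k + 2). lra.
      unfold Rdiv. rewrite Rmult_assoc, Rinv_l by lra. nra.
    + apply Rmult_le_reg_r with ((2 * INR k + 2) * (2 * (INR k + 1) + 1)). nra.
      unfold Rdiv. field_simplify; try lra.
      assert (1 <= bb k * (2 * INR k + 1)).
      { apply Rmult_le_compat_r with (r := 2 * INR k + 1) in H3; [|lra].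
        unfold Rdiv in H3. rewrite Rmult_1_l, Rinv_l in H3 by lra. lra. }
      nra.
Qed.

Lemma bb_rec k : (2 * INR k + 2) * bb (S k) = (2 * INR k + 1) * bb k.
Proof. simpl bb. pose proof (pos_INR k). field. lra. Qed.

Lemma cc_nonneg k : 0 <= cc k.
Proof. destruct (bb_facts k) as [H _]. unfold cc. pose proof (pos_INR k). apply Rlt_le, Rdiv_lt_0_compat; lra. Qed.

Lemma cc_lb k : 1 / (2 * INR k + 1) ^ 2 <= cc k.
Proof. destruct (bb_facts k) as [_ [_ H]]. unfold cc. pose proof (pos_INR k).
  apply Rmult_le_reg_r with (2 * INR k + 1). lra.
  replace (1 / (2 * INR k + 1) ^ 2 * (2 * INR k + 1)) with (1 / (2 * INR k + 1)) by (field; lra).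
  replace (bb k / (2 * INR k + 1) * (2 * INR k + 1)) with (bb k) by (field; lra). auto. Qed.

Lemma sumR_S n f : sumR (S n) f = sumR n f + f n.
Proof. reflexivity. Qed.

Definition SS K r := sumR K (fun k => cc k * r ^ (2 * k + 1)).
Definition DD K r := sumR K (fun k => bb k * r ^ (2 * k)).
Definition EE K r := sumR K (fun k => bb k * (INR (2 * k) * r ^ (pred (2 * k)))).

Lemma dpl_eq f x l l' : derivable_pt_lim f x l -> l = l' -> derivable_pt_lim f x l'.
Proof. intros H ->. auto. Qed.

Lemma deriv_sumR K (f f' : nat -> R -> R) x :
  (forall k, derivable_pt_lim (f k) x (f' k x)) ->
  derivable_pt_lim (fun r => sumR K (fun k => f k r)) x (sumR K (fun k => f' k x)).
Proof.
  intros H. induction K; simpl.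
  - apply (derivable_pt_lim_const 0).
  - apply (derivable_pt_lim_plus (fun r => sumR K (fun k => f k r)) (f K)); auto.
Qed.

Lemma deriv_monom c n x : derivable_pt_lim (fun r => c * r ^ n) x (c * (INR n * x ^ pred n)).
Proof. apply (derivable_pt_lim_scal (fun r => r ^ n)). apply derivable_pt_lim_pow. Qed.

Lemma deriv_SS K x : derivable_pt_lim (SS K) x (DD K x).
Proof.
  unfold SS. eapply dpl_eq. apply (deriv_sumR K (fun k r => cc k * r ^ (2 * k + 1))
     (fun k x => cc k * (INR (2*k+1) * x ^ pred (2*k+1)))). intros; apply deriv_monom.
  unfold DD. apply sumR_ext. intros k _. replace (pred (2*k+1)) with (2*k)%nat by lia.
  rewrite plus_INR, mult_INR. unfold cc. simpl INR. pose proof (pos_INR k). field. lra.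
Qed.

Lemma deriv_DD K x : derivable_pt_lim (DD K) x (EE K x).
Proof.
  unfold DD. apply (deriv_sumR K (fun k r => bb k * r ^ (2 * k))
     (fun k x => bb k * (INR (2*k) * x ^ pred (2*k)))). intros; apply deriv_monom.
Qed.

Lemma ED_identity K r : (1 - r^2) * EE (S K) r - r * DD (S K) r = - (2 * INR K + 1) * bb K * r ^ (2 * K + 1).
Proof.
  induction K.
  - unfold EE, DD. simpl. ring.
  - replace (EE (S (S K)) r) with (EE (S K) r + bb (S K) * (INR (2 * S K) * r ^ (2 * K + 1))).
    2:{ unfold EE. rewrite (sumR_S (S K)). cbv beta. f_equal. replace (pred (2 * S K)) with (2*K+1)%nat by lia. auto. }
    replace (DD (S (S K)) r) with (DD (S K) r + bb (S K) * r ^ (2 * K + 2)).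
    2:{ unfold DD. rewrite (sumR_S (S K)). cbv beta. f_equal. replace (2 * S K)%nat with (2*K+2)%nat by lia. auto. }
    replace ((1 - r ^ 2) * (EE (S K) r + bb (S K) * (INR (2 * S K) * r ^ (2 * K + 1))) -
      r * (DD (S K) r + bb (S K) * r ^ (2 * K + 2))) with
      (((1 - r^2) * EE (S K) r - r * DD (S K) r) + (1 - r^2) * bb (S K) * (INR (2 * S K) * r ^ (2 * K + 1))
        - r * bb (S K) * r ^ (2 * K + 2)) by ring.
    rewrite IHK.
    replace (r ^ (2 * K + 2)) with (r * r ^ (2*K+1)) by (replace (2*K+2)%nat with (S (2*K+1)) by lia; auto).
    replace (r ^ (2 * S K + 1)) with (r * r * r ^ (2*K+1)) by (replace (2*S K+1)%nat with (S (S (2*K+1))) by lia; simpl; ring).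
    rewrite mult_INR, S_INR. simpl (INR 2).
    pose proof (bb_rec K) as H. simpl (INR 0). rewrite S_INR.
    set (X := r ^ (2 * K + 1)).
    replace (INR 0) with 0 by reflexivity. rewrite (S_INR K). transitivity (X * ((2 * INR K + 2) * bb (S K) - (2 * INR K + 1) * bb K) - (2 * INR K + 3) * bb (S K) * (r * r * X)). ring.
    rewrite H. ring.
Qed.

Lemma even_pow_nonneg r k : 0 <= r ^ (2 * k).
Proof. rewrite pow_mult. apply pow_le. nra. Qed.

Lemma DD_nonneg K r : 0 <= DD K r.
Proof. unfold DD. apply sumR_nonneg. intros k _. destruct (bb_facts k) as [H _].
  pose proof (even_pow_nonneg r k). nra. Qed.

Lemma DD_S0 K : DD (S K) 0 = 1.
Proof. induction K. - unfold DD; simpl; ring.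
  - unfold DD in *. rewrite sumR_S, IHK. simpl. ring. Qed.

Lemma SS_0 K : SS K 0 = 0.
Proof. unfold SS. transitivity (sumR K (fun _ => 0)); [|apply sumR_zero]. apply sumR_ext. intros. rewrite pow_i by lia. ring. Qed.

Lemma deriv_phi2 K x : derivable_pt_lim (fun r => (1 - r^2) * (DD K r * DD K r)) x
   (2 * DD K x * ((1 - x^2) * EE K x - x * DD K x)).
Proof.
  eapply dpl_eq.
  apply (derivable_pt_lim_mult (fun r => 1 - r^2) (fun r => DD K r * DD K r)).
  - apply (derivable_pt_lim_minus (fun _ => 1) (fun r => r^2)).
    apply (derivable_pt_lim_const 1). apply derivable_pt_lim_pow.
  - apply (derivable_pt_lim_mult (DD K) (DD K)); apply deriv_DD.
  - simpl. ring.
Qed.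

Lemma sig_facts c : 0 <= c < 1 -> 0 < sqrt (1 - c^2) /\ sqrt (1 - c^2) * sqrt (1 - c^2) = 1 - c^2.
Proof. intros H. split. apply sqrt_lt_R0. nra. apply sqrt_sqrt. nra. Qed.

Lemma phi2_le1 K r : 0 <= r <= 1 -> (1 - r^2) * (DD K r * DD K r) <= 1.
Proof.
  intros Hr. destruct K as [|K]. { unfold DD; simpl. lra. }
  destruct (Req_dec r 0) as [->|Hr0]. { rewrite DD_S0. lra. }
  destruct (MVT_cor2 (fun r => (1 - r^2) * (DD (S K) r * DD (S K) r))
     (fun x => 2 * DD (S K) x * ((1 - x^2) * EE (S K) x - x * DD (S K) x)) 0 r) as [c [Hc1 Hc2]].
  lra. intros; apply deriv_phi2.
  rewrite ED_identity in Hc1. rewrite DD_S0 in Hc1.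
  pose proof (DD_nonneg (S K) c). destruct (bb_facts K) as [Hb _].
  assert (0 <= c ^ (2 * K + 1)) by (apply pow_le; lra).
  pose proof (pos_INR K).
  assert (0 <= 2 * DD (S K) c * ((2 * INR K + 1) * bb K * c ^ (2 * K + 1))).
  { apply Rmult_le_pos. lra. apply Rmult_le_pos; [|lra]. nra. }
  replace (0 ^ 2) with 0 in Hc1 by ring. nra.
Qed.

Lemma sigD_le1 K c : 0 <= c < 1 -> sqrt (1 - c^2) * DD K c <= 1.
Proof.
  intros Hc. destruct (sig_facts c Hc) as [H1 H2]. pose proof (phi2_le1 K c ltac:(lra)).
  pose proof (DD_nonneg K c). rewrite <- H2 in H.
  assert (E : (sqrt (1 - c ^ 2) * DD K c) * (sqrt (1 - c ^ 2) * DD K c) = sqrt (1 - c ^ 2) * sqrt (1 - c ^ 2) * (DD K c * DD K c)) by ring.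
  rewrite <- E in H.
  assert (0 <= sqrt (1 - c ^ 2) * DD K c) by (apply Rmult_le_pos; lra).
  nra.
Qed.

Lemma phi2_quant K r : 0 <= r < 1 ->
  (1 - (1 - r^2) * (DD (S K) r * DD (S K) r)) * sqrt (1 - r^2) <= 2 * (2 * INR K + 1) * r ^ (2 * K + 2).
Proof.
  intros Hr.
  destruct (Req_dec r 0) as [->|Hr0].
  { rewrite DD_S0. replace ((1 - (1 - 0 ^ 2) * (1 * 1))) with 0 by ring. pose proof (pos_INR K).
    rewrite (pow_i (2 * K + 2)) by lia. lra. }
  destruct (MVT_cor2 (fun r => (1 - r^2) * (DD (S K) r * DD (S K) r))
     (fun x => 2 * DD (S K) x * ((1 - x^2) * EE (S K) x - x * DD (S K) x)) 0 r) as [c [Hc1 Hc2]].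
  lra. intros; apply deriv_phi2.
  rewrite ED_identity in Hc1. rewrite DD_S0 in Hc1.
  replace (0 ^ 2) with 0 in Hc1 by ring.
  assert (E : 1 - (1 - r ^ 2) * (DD (S K) r * DD (S K) r) =
     2 * DD (S K) c * ((2 * INR K + 1) * bb K * c ^ (2 * K + 1)) * r) by lra.
  rewrite E. clear E Hc1.
  pose proof (DD_nonneg (S K) c). destruct (bb_facts K) as [Hb [Hb1 _]].
  pose proof (pos_INR K).
  assert (Hcp : 0 <= c ^ (2 * K + 1)) by (apply pow_le; lra).
  assert (Hcr : c ^ (2 * K + 1) <= r ^ (2 * K + 1)) by (apply pow_incr; lra).
  assert (Hsig : sqrt (1 - r^2) <= sqrt (1 - c^2)) by (apply sqrt_le_1_alt; nra).
  pose proof (sigD_le1 (S K) c ltac:(lra)).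
  destruct (sig_facts r Hr) as [Hs1 _].
  assert (HD : DD (S K) c * sqrt (1 - r^2) <= 1).
  { apply Rle_trans with (sqrt (1 - c ^ 2) * DD (S K) c); [|auto].
    rewrite (Rmult_comm (sqrt _)). apply Rmult_le_compat_l; auto. }
  replace (r ^ (2 * K + 2)) with (r ^ (2 * K + 1) * r) by (replace (2*K+2)%nat with (S (2*K+1)) by lia; simpl; ring).
  set (A := (2 * INR K + 1)) in *. set (P := c ^ (2 * K + 1)) in *. set (Q := r ^ (2 * K + 1)) in *.
  assert (0 <= A) by (unfold A; lra).
  replace (2 * DD (S K) c * (A * bb K * P) * r * sqrt (1 - r ^ 2)) with
    (2 * A * r * (bb K * P) * (DD (S K) c * sqrt (1 - r ^ 2))) by ring.
  assert (bb K * P <= Q) by nra.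
  assert (0 <= bb K * P) by nra.
  assert (0 <= DD (S K) c * sqrt (1 - r ^ 2)) by nra.
  assert (0 <= 2 * A * r) by nra.
  apply Rle_trans with (2 * A * r * (bb K * P) * 1).
  apply Rmult_le_compat_l; [nra|auto].
  nra.
Qed.

Lemma deriv_asin x : -1 < x < 1 -> derivable_pt_lim asin x (1 / sqrt (1 - x^2)).
Proof. intros H. apply dpl_eq with (1/sqrt(1 - x²)).
  apply derive_pt_eq_1 with (derivable_pt_asin x H). apply derive_pt_asin. rewrite Rsqr_pow2. auto. Qed.

Lemma deriv_psi K x : -1 < x < 1 -> derivable_pt_lim (fun r => asin r - SS K r) x (1 / sqrt (1 - x^2) - DD K x).
Proof. intros H. apply (derivable_pt_lim_minus asin (SS K)). apply deriv_asin; auto. apply deriv_SS. Qed.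

Lemma g_nonneg K c : 0 <= c < 1 -> 0 <= 1 / sqrt (1 - c^2) - DD K c.
Proof.
  intros Hc. destruct (sig_facts c Hc) as [H1 H2]. pose proof (sigD_le1 K c Hc).
  replace (1 / sqrt (1 - c^2) - DD K c) with ((1 - sqrt (1 - c^2) * DD K c) / sqrt (1 - c^2)) by (field; lra).
  unfold Rdiv. apply Rmult_le_pos. lra. left; apply Rinv_0_lt_compat; lra.
Qed.

Lemma L1 K s : 0 <= s < 1 -> SS K s <= asin s.
Proof.
  intros Hs. destruct (Req_dec s 0) as [->|Hs0]. { rewrite SS_0, asin_0. lra. }
  destruct (MVT_cor2 (fun r => asin r - SS K r) (fun x => 1 / sqrt (1 - x^2) - DD K x) 0 s) as [c [Hc1 Hc2]].
  lra. intros; apply deriv_psi; lra.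
  rewrite SS_0, asin_0 in Hc1. pose proof (g_nonneg K c ltac:(lra)). nra.
Qed.

Lemma L2 K s : 0 <= s < 1 -> asin s - SS (S K) s <= 2 * (2 * INR K + 1) * s ^ (2 * K + 2) / (1 - s^2).
Proof.
  intros Hs. pose proof (pos_INR K).
  assert (Hs2 : 0 < 1 - s^2) by nra.
  destruct (Req_dec s 0) as [->|Hs0].
  { rewrite SS_0, asin_0. rewrite (pow_i (2 * K + 2)) by lia. unfold Rdiv. rewrite Rmult_0_r, Rmult_0_l. lra. }
  destruct (MVT_cor2 (fun r => asin r - SS (S K) r) (fun x => 1 / sqrt (1 - x^2) - DD (S K) x) 0 s) as [c [Hc1 Hc2]].
  lra. intros; apply deriv_psi; lra.
  rewrite SS_0, asin_0 in Hc1.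
  assert (Hc : 0 <= c < 1) by lra.
  pose proof (g_nonneg (S K) c Hc) as Hg.
  set (g := 1 / sqrt (1 - c ^ 2) - DD (S K) c) in *.
  destruct (sig_facts c Hc) as [H1 H2].
  pose proof (sigD_le1 (S K) c Hc) as Hw.
  pose proof (DD_nonneg (S K) c).
  pose proof (phi2_quant K c Hc) as Hq.
  set (sg := sqrt (1 - c ^ 2)) in *.
  set (D := DD (S K) c) in *.
  assert (Eg : g * (1 - c^2) = sg * (1 - sg * D)).
  { unfold g. rewrite <- H2. field. lra. }
  assert (Hw2 : 1 - sg * D <= 1 - (1 - c ^ 2) * (D * D)).
  { rewrite <- H2. assert (0 <= sg * D) by (apply Rmult_le_pos; lra). nra. }
  assert (Hgc : g * (1 - c^2) <= 2 * (2 * INR K + 1) * c ^ (2 * K + 2)).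
  { rewrite Eg. apply Rle_trans with ((1 - (1 - c ^ 2) * (D * D)) * sg); [|auto].
    rewrite Rmult_comm. apply Rmult_le_compat_r; lra. }
  assert (Hcs : c ^ (2 * K + 2) <= s ^ (2 * K + 2)) by (apply pow_incr; lra).
  assert (0 <= c ^ (2 * K + 2)) by (apply pow_le; lra).
  assert (g * (1 - s^2) <= g * (1 - c^2)) by (apply Rmult_le_compat_l; nra).
  apply Rmult_le_reg_r with (1 - s^2). auto.
  replace (2 * (2 * INR K + 1) * s ^ (2 * K + 2) / (1 - s ^ 2) * (1 - s ^ 2)) with (2 * (2 * INR K + 1) * s ^ (2 * K + 2)) by (field; lra).
  replace (asin s - SS (S K) s) with (g * (s - 0)) by lra. replace (g * (s - 0) * (1 - s^2)) with (s * (g * (1 - s^2))) by ring.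
  assert (0 <= g * (1 - s^2)) by (apply Rmult_le_pos; lra).
  apply Rle_trans with (1 * (g * (1 - s^2))). apply Rmult_le_compat_r; lra.
  nra.
Qed.

Lemma bern2 h n : 0 <= h -> 1 + INR n * h + INR n * (INR n - 1) / 2 * h^2 <= (1 + h)^n.
Proof.
  intros Hh. induction n. { simpl. lra. }
  rewrite S_INR. simpl (_ ^ S n). pose proof (pos_INR n).
  assert (0 <= INR n * (INR n - 1) / 2 * h ^ 3).
  { destruct (Req_dec (INR n) 0) as [E|E]. rewrite E. lra.
    assert (1 <= INR n). { destruct n. simpl in E; lra. rewrite S_INR; pose proof (pos_INR n); lra. }
    assert (0 <= h^3) by (apply pow_le; lra). assert (0 <= h^2) by (apply pow_le; lra).
    assert (0 <= INR n * (INR n - 1) / 2) by (unfold Rdiv; apply Rmult_le_pos; nra). nra. }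
  assert ((1 + h) * (1 + INR n * h + INR n * (INR n - 1) / 2 * h ^ 2) <= (1 + h) * (1 + h) ^ n).
  { apply Rmult_le_compat_l; lra. }
  replace (1 + (INR n + 1) * h + (INR n + 1) * (INR n + 1 - 1) / 2 * h ^ 2) with
    ((1 + h) * (1 + INR n * h + INR n * (INR n - 1) / 2 * h ^ 2) - INR n * (INR n - 1) / 2 * h ^ 3) by field.
  lra.
Qed.

Lemma npow_small u eps : 0 <= u < 1 -> 0 < eps -> exists N, forall n, (N <= n)%nat -> INR n * u^n < eps.
Proof.
  intros Hu He. destruct (Req_dec u 0) as [->|Hu0].
  { exists 1%nat. intros n Hn. rewrite pow_i by lia. lra. }
  set (h := 1/u - 1).
  assert (Hh : 0 < h) by (unfold h; apply Rlt_0_minus; apply Rmult_lt_reg_r with u; [lra|]; field_simplify; lra).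
  destruct (INR_unbounded (2 / (h^2 * eps) + 1)) as [N HN].
  exists N. intros n Hn.
  assert (HnN : INR N <= INR n) by (apply le_INR; auto).
  pose proof (bern2 h n (Rlt_le _ _ Hh)).
  assert (E : (1 + h)^n * u^n = 1). { rewrite <- Rpow_mult_distr. replace ((1 + h) * u) with 1 by (unfold h; field; lra). apply pow1. }
  assert (0 <= u^n) by (apply pow_le; lra).
  pose proof (pos_INR n).
  assert (Hpos : 0 < 2 / (h^2 * eps)) by (unfold Rdiv; apply Rmult_lt_0_compat; [lra|apply Rinv_0_lt_compat; apply Rmult_lt_0_compat; [nra|lra]]).
  set (m := (INR n - 1) * h^2 / 2).
  assert (Hm : 1 < m * eps).
  { unfold m. assert (2 / (h^2*eps) < INR n - 1) by lra.
    apply Rmult_lt_compat_r with (r := h^2 * eps / 2) in H2; [|unfold Rdiv; apply Rmult_lt_0_compat; [apply Rmult_lt_0_compat; nra|lra]].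
    replace (2 / (h ^ 2 * eps) * (h ^ 2 * eps / 2)) with 1 in H2 by (field; split; nra). nra. }
  assert (Hkey : INR n * u^n * m <= 1).
  { unfold m. assert (INR n * (INR n - 1) / 2 * h ^ 2 <= (1 + h)^n) by nra.
    apply Rmult_le_compat_r with (r := u^n) in H2; [|auto]. rewrite E in H2. nra. }
  assert (0 < INR n - 1) by lra. assert (0 < h^2) by nra.
  assert (0 < m) by (unfold m; unfold Rdiv; apply Rmult_lt_0_compat; [apply Rmult_lt_0_compat; lra|lra]).
  destruct (Rlt_le_dec (INR n * u^n) eps) as [|Hc]; auto.
  assert (eps * m <= INR n * u^n * m) by (apply Rmult_le_compat_r; lra). nra.
Qed.

Lemma SS_cv s : 0 <= s < 1 -> Un_cv (fun K => SS K s) (asin s).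
Proof.
  intros Hs eps He.
  assert (Hs2 : 0 < 1 - s^2) by nra.
  destruct (npow_small (s^2) (eps * (1 - s^2) / 4)) as [N HN]. split; [nra|nra].
  unfold Rdiv; apply Rmult_lt_0_compat; [apply Rmult_lt_0_compat|]; lra.
  exists (S N). intros K HK. destruct K as [|K]. lia.
  pose proof (L1 (S K) s Hs). pose proof (L2 K s Hs).
  specialize (HN (S K) ltac:(lia)).
  rewrite <- pow_mult in HN. replace (2 * S K)%nat with (2 * K + 2)%nat in HN by lia.
  rewrite S_INR in HN. pose proof (pos_INR K).
  assert (0 <= s ^ (2 * K + 2)) by (apply pow_le; lra).
  assert (2 * (2 * INR K + 1) * s ^ (2 * K + 2) / (1 - s^2) < eps).
  { apply Rmult_lt_reg_r with (1 - s^2). auto.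
    replace (2 * (2 * INR K + 1) * s ^ (2 * K + 2) / (1 - s ^ 2) * (1 - s ^ 2)) with (2 * (2 * INR K + 1) * s ^ (2 * K + 2)) by (field; lra).
    nra. }
  unfold R_dist. apply Rabs_def1; lra.
Qed.

Lemma sumR_const n c : sumR n (fun _ => c) = INR n * c.
Proof. induction n; simpl sumR. simpl; ring. rewrite IHn, S_INR. ring. Qed.

Lemma sumR_minus n f g : sumR n (fun k => f k - g k) = sumR n f - sumR n g.
Proof. induction n; simpl; [lra|]. rewrite IHn. lra. Qed.

Lemma bern1 r n : 0 <= r <= 1 -> 1 - INR n * (1 - r) <= r ^ n.
Proof. intros Hr. induction n. simpl; lra. rewrite S_INR. simpl. pose proof (pos_INR n).
  assert (r * (1 - INR n * (1 - r)) <= r * r^n) by (apply Rmult_le_compat_l; lra).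
  assert (0 <= INR n * ((1-r)*(1-r))) by (apply Rmult_le_pos; nra). nra. Qed.

Lemma SS_mono_s K s : 0 <= s <= 1 -> SS K s <= SS K 1.
Proof. intros Hs. unfold SS. apply sumR_le. intros k _. apply Rmult_le_compat_l. apply cc_nonneg.
  apply Rle_trans with (1 ^ (2*k+1)). apply pow_incr. lra. rewrite pow1. lra. Qed.

Lemma SS_growing s : 0 <= s -> Un_growing (fun K => SS K s).
Proof. intros Hs K. unfold SS. rewrite sumR_S. pose proof (cc_nonneg K).
  assert (0 <= s ^ (2*K+1)) by (apply pow_le; auto). nra. Qed.

Lemma SS1_minus K r : 0 <= r <= 1 -> SS K 1 - SS K r <= INR K * (1 - r).
Proof.
  intros Hr. unfold SS. rewrite <- sumR_minus, <- sumR_const. apply sumR_le. intros k _.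
  rewrite pow1. pose proof (bern1 r (2*k+1) Hr). destruct (bb_facts k) as [H1 [H2 _]].
  pose proof (cc_nonneg k). rewrite plus_INR, mult_INR in H. simpl (INR 2) in H. simpl (INR 1) in H.
  assert (cc k * (2 * INR k + 1) = bb k) by (unfold cc; pose proof (pos_INR k); field; lra).
  assert (cc k * (1 - r ^ (2 * k + 1)) <= cc k * ((2 * INR k + 1) * (1 - r))) by (apply Rmult_le_compat_l; lra).
  nra.
Qed.

Lemma SS1_le K : SS K 1 <= PI / 2.
Proof.
  destruct (Rle_dec (SS K 1) (PI/2)) as [|Hn]; auto. exfalso.
  set (dl := Rmin (SS K 1 - PI/2) 1).
  assert (Hdl : 0 < dl /\ dl <= 1 /\ dl <= SS K 1 - PI/2).
  { unfold dl. split. apply Rmin_glb_lt; lra. split; [apply Rmin_r | apply Rmin_l]. }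
  pose proof (pos_INR K).
  set (r := 1 - dl / (2 * (INR K + 1))).
  assert (Hr : 1/2 <= r < 1).
  { unfold r. split.
    - apply Rmult_le_reg_r with (2 * (INR K + 1)). lra.
      replace ((1 - dl / (2 * (INR K + 1))) * (2 * (INR K + 1))) with (2 * (INR K + 1) - dl) by (field; lra). lra.
    - assert (0 < dl / (2 * (INR K + 1))) by (apply Rdiv_lt_0_compat; lra). lra. }
  pose proof (L1 K r ltac:(lra)). pose proof (asin_bound r).
  pose proof (SS1_minus K r ltac:(lra)).
  assert (INR K * (1 - r) < dl).
  { unfold r. replace (INR K * (1 - (1 - dl / (2 * (INR K + 1))))) with (dl * (INR K / (2 * (INR K + 1)))) by (field; lra).
    assert (INR K / (2 * (INR K + 1)) < 1).
    { apply Rmult_lt_reg_r with (2 * (INR K + 1)). lra. 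
      replace (INR K / (2 * (INR K + 1)) * (2 * (INR K + 1))) with (INR K) by (field; lra). lra. }
    nra. }
  lra.
Qed.

Lemma cv_le u l M : Un_cv u l -> (forall n, u n <= M) -> l <= M.
Proof.
  intros Hu HM. destruct (Rle_dec l M) as [|Hn]; auto. exfalso.
  destruct (Hu (l - M)) as [N HN]. lra. specialize (HN N (le_n N)). specialize (HM N).
  unfold R_dist in HN. apply Rabs_def2 in HN. lra.
Qed.

Lemma SS1_cv : Un_cv (fun K => SS K 1) (PI / 2).
Proof.
  assert (Hub : has_ub (fun K => SS K 1)).
  { exists (PI/2). intros x [i ->]. apply SS1_le. }
  destruct (growing_cv _ (SS_growing 1 ltac:(lra)) Hub) as [L HL].
  assert (HL1 : L <= PI/2) by (apply (cv_le _ _ _ HL); intros; apply SS1_le).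
  assert (HL0 : 0 <= L). { pose proof (growing_ineq _ _ (SS_growing 1 ltac:(lra)) HL 0). unfold SS in H. simpl in H. lra. }
  assert (Has : forall s, 0 <= s < 1 -> asin s <= L).
  { intros s Hs. apply (cv_le _ _ _ (SS_cv s Hs)). intros n.
    apply Rle_trans with (SS n 1). apply SS_mono_s; lra.
    apply (growing_ineq _ _ (SS_growing 1 ltac:(lra)) HL). }
  pose proof PI_RGT_0.
  assert (Hsin : forall s, 0 <= s < 1 -> s <= sin L).
  { intros s Hs. pose proof (Has s Hs). pose proof (L1 0 s Hs). unfold SS in H1; simpl in H1.
    rewrite <- (sin_asin s) by lra. destruct (Req_dec (asin s) L) as [->|Hne]. lra.
    left. apply sin_increasing_1; lra. }
  assert (HsL : sin L = 1).
  { pose proof (SIN_bound L). pose proof (sin_ge_0 L HL0 ltac:(lra)).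
    destruct (Req_dec (sin L) 1); auto. exfalso.
    pose proof (Hsin ((1 + sin L)/2) ltac:(lra)). lra. }
  assert (L = PI/2). { rewrite <- (asin_sin L) by lra. rewrite HsL. apply asin_1. }
  subst. auto.
Qed.

Lemma Un_cv_ext u v l : (forall n, u n = v n) -> Un_cv u l -> Un_cv v l.
Proof. intros E H eps He. destruct (H eps He) as [N HN]. exists N. intros n Hn. rewrite <- E. auto. Qed.

Lemma CV_scal c u l : Un_cv u l -> Un_cv (fun n => c * u n) (c * l).
Proof. intros H. apply (CV_mult (fun _ => c) u c l); auto.
  intros eps He. exists 0%nat. intros. unfold R_dist. rewrite Rminus_diag, Rabs_R0. auto. Qed.

Lemma series_t t : -1 <= t <= 1 -> Un_cv (fun K => sumR K (fun k => cc k * t ^ (2 * k + 2))) (t * asin t).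
Proof.
  intros Ht. set (s := Rabs t).
  assert (Hs : 0 <= s <= 1) by (unfold s; split; [apply Rabs_pos | apply Rabs_le; lra]).
  assert (Hcv : Un_cv (fun K => SS K s) (asin s)).
  { destruct (Req_dec s 1) as [E|E]. rewrite E, asin_1. apply SS1_cv. apply SS_cv; lra. }
  assert (Et : t * asin t = s * asin s).
  { unfold s. destruct (Rle_dec 0 t). rewrite Rabs_right by lra. auto.
    rewrite Rabs_left by lra. rewrite asin_opp. ring. }
  rewrite Et. apply Un_cv_ext with (fun K => s * SS K s). 2: apply CV_scal; auto.
  intros K. unfold SS. rewrite <- sumR_scal. apply sumR_ext. intros k _.
  replace (2 * k + 2)%nat with (2 * (k + 1))%nat by lia. rewrite pow_mult.
  rewrite <- pow2_abs. fold s. rewrite <- pow_mult.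
  replace (2 * (k + 1))%nat with (S (2 * k + 1)) by lia. simpl. ring.
Qed.

Lemma unit_dot d v : norm2 d v = 1 -> dot d v v = 1.
Proof. unfold norm2. intros H. rewrite <- (sqrt_sqrt (dot d v v)) by apply dot_self_nonneg. rewrite H. ring. Qed.

Lemma dot_bound d a b : dot d a a = 1 -> dot d b b = 1 -> -1 <= dot d a b <= 1.
Proof.
  intros Ha Hb. pose proof (kernel_CS d 1 (fun _ => a) (fun _ => 1) b 1) as H.
  unfold Qf in H. simpl in H. rewrite Ha, Hb, dot_sym in H.
  assert (dot d a b * dot d a b <= 1) by nra. nra.
Qed.

Definition Hform d n x z := sumR n (fun i => sumR n (fun j => z i * Hinf d x i j * z j)).

Lemma CV_sumR N (f : nat -> nat -> R) (l : nat -> R) :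
  (forall i, (i < N)%nat -> Un_cv (fun K => f K i) (l i)) -> Un_cv (fun K => sumR N (f K)) (sumR N l).
Proof.
  induction N; intros H; simpl.
  - intros eps He. exists 0%nat. intros. unfold R_dist. rewrite Rminus_diag, Rabs_R0. auto.
  - apply (CV_plus (fun K => sumR N (f K)) (fun K => f K N)). apply IHN. intros; apply H; lia. apply H; lia.
Qed.

Definition tt d (x : nat -> nat -> R) i j := dot d (x i) (x j).
Definition W n d x (z : nat -> R) := sumR n (fun i => sumR n (fun j => z i * z j * (tt d x i j * asin (tt d x i j)))).

Lemma tt_bound (n d : nat) (x : nat -> nat -> R) (z : nat -> R) (hunit : forall i, (i < n)%nat -> norm2 d (x i) = 1) i j : (i < n)%nat -> (j < n)%nat -> -1 <= tt d x i j <= 1.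
Proof. intros. apply dot_bound; apply unit_dot, hunit; auto. Qed.

Lemma Hform_split (n d : nat) (x : nat -> nat -> R) (z : nat -> R) (hunit : forall i, (i < n)%nat -> norm2 d (x i) = 1) : Hform d n x z = 1/4 * Qf d n x z 1 + 1 / (2 * PI) * W n d x z.
Proof.
  unfold Hform, Qf, W. rewrite <- !sumR_scal, <- sumR_plus. apply sumR_ext. intros i Hi.
  rewrite <- !sumR_scal, <- sumR_plus. apply sumR_ext. intros j Hj.
  unfold Hinf. fold (tt d x i j). cbv zeta. rewrite acos_asin by (apply (tt_bound n d x z hunit); auto).
  unfold tt. pose proof PI_RGT_0. field. lra.
Qed.

Lemma W_lim (n d : nat) (x : nat -> nat -> R) (z : nat -> R) (hunit : forall i, (i < n)%nat -> norm2 d (x i) = 1) : Un_cv (fun K => sumR K (fun k => cc k * Qf d n x z (2 * k + 2))) (W n d x z).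
Proof.
  apply Un_cv_ext with (fun K => sumR n (fun i => sumR n (fun j => z i * z j * sumR K (fun k => cc k * tt d x i j ^ (2 * k + 2))))).
  - intros K.
    rewrite (sumR_ext n _ (fun i => sumR K (fun k => sumR n (fun j => z i * z j * (cc k * tt d x i j ^ (2 * k + 2)))))).
    2:{ intros i _. rewrite <- sumR_swap. apply sumR_ext. intros j _. rewrite sumR_scal. auto. }
    rewrite sumR_swap. apply sumR_ext. intros k _. unfold Qf. rewrite <- sumR_scal. apply sumR_ext. intros i _.
    rewrite <- sumR_scal. apply sumR_ext. intros j _. unfold tt. ring.
  - unfold W. apply CV_sumR. intros i Hi. apply CV_sumR. intros j Hj.
    apply CV_scal. apply series_t. apply (tt_bound n d x z hunit); auto.
Qed.

Lemma T_growing (n d : nat) (x : nat -> nat -> R) (z : nat -> R) (hunit : forall i, (i < n)%nat -> norm2 d (x i) = 1) : Un_growing (fun K => sumR K (fun k => cc k * Qf d n x z (2 * k + 2))).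
Proof. intros K. rewrite sumR_S. pose proof (Rmult_le_pos _ _ (cc_nonneg K) (Qf_nonneg d n x (2*K+2) z)). lra. Qed.

Lemma T_nonneg (n d : nat) (x : nat -> nat -> R) (z : nat -> R) (hunit : forall i, (i < n)%nat -> norm2 d (x i) = 1) K : 0 <= sumR K (fun k => cc k * Qf d n x z (2 * k + 2)).
Proof. apply sumR_nonneg. intros k _. pose proof (cc_nonneg k). pose proof (Qf_nonneg d n x (2*k+2) z). nra. Qed.

Lemma W_ge (n d : nat) (x : nat -> nat -> R) (z : nat -> R) (hunit : forall i, (i < n)%nat -> norm2 d (x i) = 1) k : cc k * Qf d n x z (2 * k + 2) <= W n d x z.
Proof.
  pose proof (growing_ineq _ _ (T_growing n d x z hunit) (W_lim n d x z hunit) (S k)). cbv beta in H. rewrite sumR_S in H. pose proof (T_nonneg n d x z hunit k). lra.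
Qed.

Lemma W_nonneg (n d : nat) (x : nat -> nat -> R) (z : nat -> R) (hunit : forall i, (i < n)%nat -> norm2 d (x i) = 1) : 0 <= W n d x z.
Proof. pose proof (growing_ineq _ _ (T_growing n d x z hunit) (W_lim n d x z hunit) 0). simpl in H. auto. Qed.

Lemma key_bound (n d : nat) (x : nat -> nat -> R) (z : nat -> R) (hunit : forall i, (i < n)%nat -> norm2 d (x i) = 1) p : (p = 1%nat \/ (Nat.Even p /\ (2 <= p)%nat)) ->
  Qf d n x z p <= (3 * INR p)^2 * Hform d n x z.
Proof.
  intros Hp. rewrite (Hform_split n d x z hunit). pose proof (W_nonneg n d x z hunit). pose proof PI_RGT_0. pose proof PI_4.
  assert (HW : 0 <= 1 / (2 * PI) * W n d x z) by (apply Rmult_le_pos; [apply Rlt_le, Rdiv_lt_0_compat|]; lra).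
  pose proof (Qf_nonneg d n x 1 z).
  destruct Hp as [->|[[m ->] Hm]].
  - simpl INR. nra.
  - destruct m as [|k]. lia.
    replace (2 * S k)%nat with (2 * k + 2)%nat by lia.
    pose proof (W_ge n d x z hunit k). pose proof (cc_lb k). pose proof (pos_INR k).
    pose proof (Qf_nonneg d n x (2*k+2) z) as HQ.
    set (Q := Qf d n x z (2 * k + 2)) in *.
    rewrite plus_INR, mult_INR. simpl (INR 2).
    assert (Hc : 1 <= (2 * INR k + 2)^2 * cc k).
    { apply Rle_trans with ((2 * INR k + 1)^2 * (1 / (2 * INR k + 1) ^ 2)).
      right. field. lra.
      apply Rmult_le_compat. nra. apply Rlt_le, Rdiv_lt_0_compat; nra. nra. auto. }
    assert (HW2 : 1/(2*PI) * (cc k * Q) <= 1 / (2 * PI) * W n d x z).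
    { apply Rmult_le_compat_l; auto. apply Rlt_le, Rdiv_lt_0_compat; lra. }
    assert (E : (3 * (2 * INR k + 2)) ^ 2 * (1 / (2 * PI) * (cc k * Q)) = (9 / (2*PI)) * ((2 * INR k + 2)^2 * cc k) * Q) by (field; lra).
    assert (H9 : 1 <= 9 / (2 * PI)) by (apply Rmult_le_reg_r with (2*PI); [lra|]; field_simplify; lra).
    assert (Q <= (9 / (2*PI)) * ((2 * INR k + 2)^2 * cc k) * Q).
    { rewrite <- (Rmult_1_l Q) at 1. apply Rmult_le_compat_r; auto. rewrite <- (Rmult_1_l 1). apply Rmult_le_compat; lra. }
    assert (0 <= (3 * (2 * INR k + 2)) ^ 2) by nra.
    assert ((3 * (2 * INR k + 2)) ^ 2 * (1 / (2 * PI) * (cc k * Q)) <= (3 * (2 * INR k + 2)) ^ 2 * (1 / (2 * PI) * W n d x z)).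
    { apply Rmult_le_compat_l; auto. }
    assert (0 <= (3 * (2 * INR k + 2)) ^ 2 * (1 / 4 * Qf d n x z 1)) by (apply Rmult_le_pos; lra).
    rewrite Rmult_plus_distr_l. lra.
Qed.


Lemma sumR_delta n i f : (i < n)%nat -> sumR n (fun k => (if Nat.eqb i k then 1 else 0) * f k) = f i.
Proof.
  induction n; intros Hi. lia. rewrite sumR_S.
  destruct (Nat.eq_dec i n) as [->|Hne].
  - rewrite Nat.eqb_refl. rewrite (sumR_ext n _ (fun _ => 0)). rewrite sumR_zero. ring.
    intros k Hk. destruct (Nat.eqb_spec n k). lia. ring.
  - rewrite IHn by lia. destruct (Nat.eqb_spec i n). lia. ring.
Qed.

Theorem corollary6p1
  (n d : nat) (x : nat -> nat -> R)
  (hunit : forall i, (i < n)%nat -> norm2 d (x i) = 1)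
  (hpd : pos_def n (Hinf d x))
  (Hinv : nat -> nat -> R) (hinv : is_inverse n (Hinf d x) Hinv)
  (m : nat) (alpha : nat -> R) (beta : nat -> nat -> R) (p : nat -> nat)
  (hp : forall j, (j < m)%nat -> p j = 1%nat \/ (Nat.Even (p j) /\ (2 <= p j)%nat))
  (y : nat -> R)
  (hy : forall i, (i < n)%nat ->
          y i = sumR m (fun j => alpha j * (dot d (beta j) (x i)) ^ (p j))) :
  sqrt (quad n Hinv y)
    <= 3 * sumR m (fun j => INR (p j) * Rabs (alpha j) * (norm2 d (beta j)) ^ (p j)).
Proof.
  set (z := fun i => sumR n (fun k => Hinv i k * y k)).
  destruct hinv as [hinv1 _].
  assert (Hz : forall i, (i < n)%nat -> sumR n (fun j => Hinf d x i j * z j) = y i).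
  { intros i Hi. unfold z.
    rewrite (sumR_ext n _ (fun j => sumR n (fun k => Hinf d x i j * Hinv j k * y k))).
    2:{ intros j _. rewrite <- sumR_scal. apply sumR_ext. intros; ring. }
    rewrite sumR_swap.
    rewrite (sumR_ext n _ (fun k => (if Nat.eqb i k then 1 else 0) * y k)).
    apply sumR_delta; auto.
    intros k Hk. rewrite <- (hinv1 i k Hi Hk). rewrite Rmult_comm, <- sumR_scal. apply sumR_ext. intros; ring. }
  set (q := quad n Hinv y).
  assert (Hq1 : q = sumR n (fun i => z i * y i)).
  { unfold q, quad, z. apply sumR_ext. intros i _. rewrite Rmult_comm, <- sumR_scal. apply sumR_ext. intros; ring. }
  assert (Hq2 : q = Hform d n x z).
  { rewrite Hq1. unfold Hform. apply sumR_ext. intros i Hi. rewrite <- (Hz i Hi), <- sumR_scal.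
    apply sumR_ext. intros; ring. }
  assert (Hq0 : 0 <= q).
  { pose proof (key_bound n d x z hunit 1 (or_introl eq_refl)). pose proof (Qf_nonneg d n x 1 z).
    simpl INR in H. rewrite <- Hq2 in H. nra. }
  set (RR := sumR m (fun j => INR (p j) * Rabs (alpha j) * (norm2 d (beta j)) ^ (p j))).
  assert (HR0 : 0 <= RR).
  { apply sumR_nonneg. intros j _. apply Rmult_le_pos. apply Rmult_le_pos. apply pos_INR. apply Rabs_pos.
    apply pow_le. apply sqrt_pos. }
  assert (Hq3 : q = sumR m (fun j => alpha j * sumR n (fun i => z i * dot d (beta j) (x i) ^ p j))).
  { rewrite Hq1. rewrite (sumR_ext n _ (fun i => sumR m (fun j => alpha j * (z i * dot d (beta j) (x i) ^ p j)))).
    rewrite sumR_swap. apply sumR_ext. intros j _. apply sumR_scal.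
    intros i Hi. rewrite (hy i Hi). rewrite <- sumR_scal. apply sumR_ext. intros; ring. }
  assert (Hterm : forall j, (j < m)%nat -> alpha j * sumR n (fun i => z i * dot d (beta j) (x i) ^ p j)
          <= sqrt q * (3 * (INR (p j) * Rabs (alpha j) * norm2 d (beta j) ^ p j))).
  { intros j Hj. set (B := sumR n (fun i => z i * dot d (beta j) (x i) ^ p j)).
    pose proof (kernel_CS d n x z (beta j) (p j)) as HCS. fold B in HCS.
    pose proof (key_bound n d x z hunit (p j) (hp j Hj)) as HK. rewrite <- Hq2 in HK.
    set (N := norm2 d (beta j)).
    assert (HN : dot d (beta j) (beta j) ^ p j = (N ^ p j) * (N ^ p j)).
    { rewrite <- Rpow_mult_distr. unfold N, norm2. rewrite sqrt_sqrt by apply dot_self_nonneg. auto. }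
    rewrite HN in HCS.
    assert (HN0 : 0 <= N ^ p j) by (apply pow_le; apply sqrt_pos).
    assert (Hsq : sqrt q * sqrt q = q) by (apply sqrt_sqrt; auto).
    pose proof (sqrt_pos q). pose proof (pos_INR (p j)).
    set (X := 3 * INR (p j) * N ^ p j * sqrt q).
    assert (HX0 : 0 <= X) by (unfold X; repeat apply Rmult_le_pos; lra).
    assert (HB2 : B^2 <= X^2).
    { apply Rle_trans with (Qf d n x z (p j) * (N ^ p j * N ^ p j)); auto.
      replace (X^2) with ((3 * INR (p j))^2 * (sqrt q * sqrt q) * (N ^ p j * N ^ p j)) by (unfold X; ring). rewrite Hsq.
      apply Rmult_le_compat_r. nra. auto. }
    assert (HB : Rabs B <= X).
    { rewrite <- (Rabs_right X) by lra. apply Rsqr_le_abs_0. rewrite !Rsqr_pow2. auto. }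
    apply Rle_trans with (Rabs (alpha j) * Rabs B).
    { rewrite <- Rabs_mult. apply Rle_abs. }
    apply Rle_trans with (Rabs (alpha j) * X). apply Rmult_le_compat_l; [apply Rabs_pos|auto].
    unfold X. right. ring. }
  assert (Hq4 : q <= sqrt q * (3 * RR)).
  { rewrite Hq3 at 1. unfold RR. rewrite <- sumR_scal, <- sumR_scal. apply sumR_le. intros j Hj.
    apply Hterm; auto. }
  fold q. destruct (Req_dec (sqrt q) 0) as [E|E]. { rewrite E. lra. }
  pose proof (sqrt_pos q).
  assert (Hs : sqrt q * sqrt q <= sqrt q * (3 * RR)) by (rewrite sqrt_sqrt by auto; auto).
  apply Rmult_le_reg_l with (sqrt q). lra. lra.
Qed.
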